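(* Let $S$ be a closed oriented surface of genus at least two. If $f_1,\ldots,f_m$ generate an abelian subgroup $\mathcal{F}$ of $\mathrm{Homeo}_0(S)$, then $\bigcap_{i=1}^m \mathrm{Fix}_c(f_i)\subset \mathrm{Fix}_c(\mathcal{F})$.
   Context: $\mathrm{Homeo}_0(S)$ is the group of homeomorphisms of $S$ isotopic to the identity. Let $\tilde S$ be the universal cover of $S$. For $f\in\mathrm{Homeo}_0(S)$, the identity lift $\tilde f$ is the unique lift of $f$ to $\tilde S$ commuting with all covering translations. $\mathrm{Fix}_c(f)$ (the contractible fixed points) is the projection to $S$ of $\mathrm{Fix}(\tilde f)$. For a subgroup $\mathcal{F}$, $\mathrm{Fix}_c(\mathcal{F})$ is the set of points lying in $\mathrm{Fix}_c(f)$ for all $f\in\mathcal{F}$. *)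

(* Defs.v *)
From HB Require Import structures.
From mathcomp Require Import all_boot all_order all_algebra.
From mathcomp Require Import all_classical all_reals all_analysis.
Import numFieldNormedType.Exports.
Set Implicit Arguments. Unset Strict Implicit. Unset Printing Implicit Defensive.
Import Order.TTheory GRing.Theory Num.Theory.
Local Open Scope classical_set_scope.
Local Open Scope ring_scope.

Definition hplane (R : realType) : set (R * R) := [set p | 0 < p.2].

(* Action of a 2x2 real matrix g = [[a,b],[c,d]] of determinant 1 on the upper
   half plane by the Moebius transformation z |-> (a z + b) / (c z + d),
   written in real coordinates z = x + i y. *)
Definition mob (R : realType) (g : 'M[R]_2) (p : R * R) : R * R :=
  let a := g 0 0 in let b := g 0 1 in let c := g 1 0 in let d := g 1 1 in
  let x := p.1 in let y := p.2 in
  let D := (c * x + d) ^+ 2 + (c * y) ^+ 2 in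
  (((a * x + b) * (c * x + d) + a * c * y ^+ 2) / D, y / D).

(* Gamma (a set of matrices) is a discrete subgroup of SL(2,R) acting freely
   (modulo -1) on the hyperbolic plane: a torsion-free Fuchsian group. *)
Definition fuchsian_free (R : realType) (Gam : set 'M[R]_2) : Prop :=
  [/\ (forall g, Gam g -> \det g = 1) /\ Gam 1%:M,
      (forall g h, Gam g -> Gam h -> Gam (g *m h)),
      (forall g, Gam g -> Gam (invmx g)),
      (exists2 e : R, 0 < e & forall g, Gam g ->
          (forall i j, `|g i j - ((i == j)%:R : R)| < e) -> g = 1%:M)
    & (forall g z, Gam g -> @hplane R z -> mob g z = z ->
          g = 1%:M \/ g = - 1%:M)].

(* pi : hplane -> S is (a model of) the quotient map hplane -> hplane/Gamma:
   continuous, open, surjective, and its fibres are exactly the Gamma-orbits.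
   Hence S is homeomorphic to hplane/Gamma and pi is the universal cover. *)
Definition quotient_by (R : realType) (S : topologicalType)
    (Gam : set 'M[R]_2) (pi : R * R -> S) : Prop :=
  [/\ {within @hplane R, continuous pi},
      (forall U, open U -> U `<=` @hplane R -> open (pi @` U)),
      (forall x : S, exists2 z, @hplane R z & pi z = x)
    & (forall z w, @hplane R z -> @hplane R w ->
          (pi z = pi w <-> exists2 g, Gam g & w = mob g z))].

(* A closed oriented surface of genus >= 2, given with its universal cover
   (the hyperbolic plane) and its group of covering translations Gamma. *)
Definition hyperbolic_surface (R : realType) (S : topologicalType)
    (Gam : set 'M[R]_2) (pi : R * R -> S) : Prop :=
  [/\ fuchsian_free Gam, quotient_by Gam pi & compact [set: S]].

Definition homeo (S : topologicalType) (f : S -> S) : Prop :=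
  continuous f /\ exists2 g : S -> S, continuous g & cancel f g /\ cancel g f.

Definition Homeo0 (R : realType) (S : topologicalType) (f : S -> S) : Prop :=
  homeo f /\ exists I : R * S -> S,
    [/\ {within `[0, 1] `*` [set: S], continuous I},
        (forall t : R, 0 <= t <= 1 -> homeo (fun x => I (t, x))),
        (forall x, I (0, x) = x)
      & (forall x, I (1, x) = f x)].

Definition identity_lift (R : realType) (S : topologicalType)
    (Gam : set 'M[R]_2) (pi : R * R -> S) (f : S -> S) (F : R * R -> R * R)
    : Prop :=
  [/\ {within @hplane R, continuous F},
      (forall z, @hplane R z -> @hplane R (F z)),
      (forall z, @hplane R z -> pi (F z) = f (pi z))
    & (forall g z, Gam g -> @hplane R z -> F (mob g z) = mob g (F z))].

Definition Fix_c (R : realType) (S : topologicalType)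
    (Gam : set 'M[R]_2) (pi : R * R -> S) (f : S -> S) : set S :=
  [set x | exists F, identity_lift Gam pi f F /\
             exists2 z, @hplane R z & F z = z /\ pi z = x].

Inductive gen_group (S : Type) (m : nat) (fs : 'I_m -> S -> S) : (S -> S) -> Prop :=
  | gen_id : gen_group fs id
  | gen_mul : forall g i, gen_group fs g -> gen_group fs (g \o fs i)
  | gen_mulV : forall g i h, gen_group fs g -> cancel (fs i) h ->
      cancel h (fs i) -> gen_group fs (g \o h).

Definition Fix_c_group (R : realType) (S : topologicalType)
    (Gam : set 'M[R]_2) (pi : R * R -> S) (G : (S -> S) -> Prop) : set S :=
  [set x | forall f, G f -> Fix_c Gam pi f x].

(* Main.v *)
Require Import Defs.
From HB Require Import structures.
From mathcomp Require Import all_boot all_order all_algebra.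
From mathcomp Require Import all_classical all_reals all_analysis.
From mathcomp Require Import ring lra.
Import numFieldNormedType.Exports.
Import Order.TTheory GRing.Theory Num.Theory.
Local Open Scope classical_set_scope.
Local Open Scope ring_scope.

Module Aux.
Set Implicit Arguments. Unset Strict Implicit. Unset Printing Implicit Defensive.
Section S.
Variable R : realType.
Implicit Types (g h : 'M[R]_2) (z : R * R).

Lemma det22 g : \det g = g 0 0 * g 1 1 - g 0 1 * g 1 0.
Proof.
rewrite (expand_det_row _ 0) !big_ord_recl big_ord0 addr0 /cofactor !det_mx11 !mxE /=.
have l1 : lift (0:'I_2) (0:'I_1) = 1 by apply: val_inj.
have l2 : lift (1:'I_2) (0:'I_1) = 0 by apply: val_inj.
rewrite /= l1 l2 (_ : @ord0 1 = 0) // /bump /= expr0 expr1; ring.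
Qed.

Definition Dm g z := (g 1 0 * z.1 + g 1 1)^+2 + (g 1 0 * z.2)^+2.
Definition Nm g z := (g 0 0 * z.1 + g 0 1) * (g 1 0 * z.1 + g 1 1) + g 0 0 * g 1 0 * z.2 ^+ 2.

Lemma mobE g z : mob g z = (Nm g z / Dm g z, z.2 / Dm g z).
Proof. by []. Qed.

Lemma Dm_pos g z : \det g = 1 -> 0 < z.2 -> 0 < Dm g z.
Proof.
rewrite det22 => hd hy; rewrite /Dm.
have h1 := sqr_ge0 (g 1 0 * z.1 + g 1 1).
have h2 := sqr_ge0 (g 1 0 * z.2).
rewrite lt0r addr_ge0 // andbT; apply/negP => /eqP h0.
have e1 : (g 1 0 * z.1 + g 1 1)^+2 = 0 by apply/eqP; rewrite eq_le h1 andbT -h0 lerDl.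
have e2 : (g 1 0 * z.2)^+2 = 0 by move: h0; rewrite e1 add0r.
move: e2 => /eqP; rewrite sqrf_eq0 mulf_eq0 (gt_eqF hy) orbF => /eqP c0.
move: e1 => /eqP; rewrite sqrf_eq0 c0 mul0r add0r => /eqP d0.
by move: hd; rewrite c0 d0 !mulr0 subr0 => /eqP; rewrite eq_sym oner_eq0.
Qed.

Lemma hplane_mob g z : \det g = 1 -> hplane z -> hplane (mob g z).
Proof. by move=> hd hz; rewrite /hplane /= divr_gt0 // Dm_pos. Qed.

Lemma mob1 z : mob 1%:M z = z.
Proof.
case: z => x y; rewrite /mob !mxE /=.
by rewrite !(mul0r,mulr0,mul1r,mulr1,addr0,add0r,expr1n,divr1) expr0n /= addr0 !divr1.
Qed.

Lemma mobN1 z : mob (- 1%:M) z = z.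
Proof.
case: z => x y; rewrite /mob !mxE /=.
rewrite !(mul0r,mulr0,mul1r,mulr1,addr0,add0r,oppr0,mulN1r,mulrN1,opprK,mulrNN).
rewrite ?sqrrN ?expr1n ?expr0n /= ?addr0 ?divr1 //.
Qed.

Lemma invmx22 h : \det h = 1 ->
  [/\ invmx h 0 0 = h 1 1, invmx h 0 1 = - h 0 1, invmx h 1 0 = - h 1 0 & invmx h 1 1 = h 0 0].
Proof.
move=> hd; have hu : h \in unitmx by rewrite unitmxE hd unitr1.
rewrite /invmx hu hd invr1 !scale1r.
have l1 : lift (0:'I_2) (0:'I_1) = 1 by apply: val_inj.
have l2 : lift (1:'I_2) (0:'I_1) = 0 by apply: val_inj.
rewrite !mxE /cofactor !det_mx11 !mxE /= l1 l2 /bump /=.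
have m1 : (1 %% 2 = 1)%N by [].
rewrite m1 /=; split. all: rewrite ?(expr0, expr1, mul1r, mulN1r, expr2, mulrNN, mulr1, mul1r, opprK) //.
Qed.

Lemma I2P (i : 'I_2) : i = 0 \/ i = 1.
Proof. case: i => [[|[|n]] Hn]; [left|right|by []]; exact: val_inj. Qed.

Lemma invmx_bound h B : \det h = 1 -> (forall i j, `|h i j| <= B) ->
  forall i j, `|invmx h i j| <= B.
Proof.
move=> hd hB i j; case: (invmx22 hd) => e00 e01 e10 e11.
by case: (I2P i) => ->; case: (I2P j) => ->; rewrite ?e00 ?e01 ?e10 ?e11 ?normrN.
Qed.

Lemma disc_eq (Gam : set 'M[R]_2) (e0 : R) g h (B eta : R) :
  (forall g, Gam g -> (forall i j, `|g i j - ((i == j)%:R : R)| < e0) -> g = 1%:M) ->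
  (forall g h, Gam g -> Gam h -> Gam (g *m h)) ->
  (forall g, Gam g -> Gam (invmx g)) ->
  Gam g -> Gam h -> \det h = 1 -> (forall i j, `|h i j| <= B) ->
  (forall i j, `|g i j - h i j| < eta) -> 2 * eta * B < e0 -> g = h.
Proof.
move=> hdisc hmul hinv Gg Gh hd hB hgh heta.
have hu : h \in unitmx by rewrite unitmxE hd unitr1.
have hk : g *m invmx h = 1%:M.
  apply: hdisc; first exact: hmul Gg (hinv _ Gh).
  move=> i j.
  have -> : (g *m invmx h) i j - ((i == j)%:R : R) = ((g - h) *m invmx h) i j.
    by rewrite mulmxBl mulmxV // !mxE.
  rewrite !mxE !big_ord_recl big_ord0 addr0 !mxE.
  have hIB := invmx_bound hd hB.
  have b1 : forall l : 'I_2, `|(g i l - h i l) * invmx h l j| <= eta * B.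
    move=> l; rewrite normrM; apply: ler_pM; [exact: normr_ge0 | exact: normr_ge0 | exact: ltW | exact: hIB].
  apply: (le_lt_trans (ler_normD _ _)); apply: (le_lt_trans _ heta).
  move: (b1 ord0) (b1 (lift ord0 ord0)); lra.
by rewrite -(mulmxKV hu g) hk mul1mx.
Qed.

Lemma le_1sq_aux (t : R) : 0 <= t -> t <= 1 + t ^+ 2.
Proof. move=> t0; have := sqr_ge0 (t - 1); nra. Qed.

Lemma le_1sq (e : R) : `|e| <= 1 + e ^+ 2.
Proof. rewrite -real_normK ?num_real //; exact: le_1sq_aux. Qed.

Lemma sq_le_aux (t X : R) : 0 <= t -> t <= X -> t ^+ 2 <= X ^+ 2.
Proof.
move=> t0 h; have h1 : 0 <= X - t by lra.
have h2 : 0 <= X + t by lra.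
have := mulr_ge0 h1 h2; nra.
Qed.

Lemma sq_le (x X : R) : `|x| <= X -> x ^+ 2 <= X ^+ 2.
Proof. move=> h; rewrite -real_normK ?num_real //; exact: sq_le_aux. Qed.

Lemma sqB_le (u v : R) : (u - v) ^+ 2 <= 2 * u ^+ 2 + 2 * v ^+ 2.
Proof. have := sqr_ge0 (u + v); nra. Qed.

Lemma sq_bounds (a b c d x y x' y' X Y0 Y1 : R) :
  a * d - b * c = 1 -> 0 < Y0 -> x ^+ 2 <= X ^+ 2 -> x' ^+ 2 <= X ^+ 2 ->
  Y0 ^+ 2 <= y ^+ 2 -> y' ^+ 2 <= Y1 ^+ 2 ->
  let D := (c * x + d) ^+ 2 + (c * y) ^+ 2 in
  0 < D -> D <= Y1 / Y0 ->
  (a * x + b) * (c * x + d) + a * c * y ^+ 2 = x' * D -> y = y' * D ->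
  let K := Y1 / Y0 in let P := Y0 ^+ 2 in let L := K * (X ^+ 2 + Y1 ^+ 2) in
  [/\ c ^+ 2 <= K / P, d ^+ 2 <= 2 * K + 2 * (K / P) * X ^+ 2,
      a ^+ 2 <= L / P & b ^+ 2 <= 2 * L + 2 * (L / P) * X ^+ 2].
Proof.
move=> hdet Y0p hx2 hx2' hy2 hy2' D hD hDK eN eY K P L.
have Pp : 0 < P by rewrite exprn_gt0.
have Kp : 0 <= K by apply: le_trans (ltW hD) hDK.
have X2 : 0 <= X ^+ 2 by apply: le_trans (sqr_ge0 x) hx2.
have hc2P : c ^+ 2 * P <= K.
  apply: le_trans hDK; rewrite /D; have := sqr_ge0 (c * x + d).
  have : c ^+ 2 * P <= (c * y) ^+ 2 by rewrite exprMn ler_wpM2l // sqr_ge0.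
  lra.
have hc : c ^+ 2 <= K / P by rewrite ler_pdivlMr.
have hcx : (c * x) ^+ 2 <= K / P * X ^+ 2.
  by rewrite exprMn; apply: ler_pM => //; apply: sqr_ge0.
have hcxd : (c * x + d) ^+ 2 <= K.
  by apply: le_trans hDK; rewrite /D lerDl sqr_ge0.
have hd : d ^+ 2 <= 2 * K + 2 * (K / P) * X ^+ 2.
  have -> : d = (c * x + d) - c * x by ring.
  apply: le_trans (sqB_le _ _) _; lra.
set S := (a * x + b) ^+ 2 + (a * y) ^+ 2.
have eS : S * D = D * D * (x' ^+ 2 + y' ^+ 2).
  have -> : S * D = ((a * x + b) * (c * x + d) + a * c * y ^+ 2) ^+ 2 + (y * (a * d - b * c)) ^+ 2.
    by rewrite /S /D; ring.
  by rewrite eN hdet mulr1 {1}eY; ring.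
have eS' : S = D * (x' ^+ 2 + y' ^+ 2).
  apply/(mulIf (lt0r_neq0 hD)); rewrite /= eS; ring.
have hSL : S <= L.
  rewrite eS' /L; apply: ler_pM => //; [exact: ltW | | by lra].
  by apply: addr_ge0; apply: sqr_ge0.
have ha2P : a ^+ 2 * P <= L.
  apply: le_trans hSL; rewrite /S; have := sqr_ge0 (a * x + b).
  have : a ^+ 2 * P <= (a * y) ^+ 2 by rewrite exprMn ler_wpM2l // sqr_ge0.
  lra.
have ha : a ^+ 2 <= L / P by rewrite ler_pdivlMr.
have hax : (a * x) ^+ 2 <= L / P * X ^+ 2.
  by rewrite exprMn; apply: ler_pM => //; apply: sqr_ge0.
have haxb : (a * x + b) ^+ 2 <= L.
  by apply: le_trans hSL; rewrite /S lerDl sqr_ge0.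
have hb : b ^+ 2 <= 2 * L + 2 * (L / P) * X ^+ 2.
  have -> : b = (a * x + b) - a * x by ring.
  apply: le_trans (sqB_le _ _) _; lra.
by split.
Qed.

Lemma entry_bound g (x y x' y' X Y0 Y1 : R) : \det g = 1 -> 0 < Y0 ->
  `|x| <= X -> `|x'| <= X -> Y0 <= y <= Y1 -> Y0 <= y' <= Y1 ->
  mob g (x, y) = (x', y') ->
  let K := Y1 / Y0 in let P := Y0 ^+ 2 in let L := K * (X ^+ 2 + Y1 ^+ 2) in
  forall i j, `|g i j| <= 1 + (K / P + (2 * K + 2 * (K / P) * X ^+ 2) + L / P
                              + (2 * L + 2 * (L / P) * X ^+ 2)).
Proof.
move=> hdet Y0p hx hx' /andP[y0 y1] /andP[y0' y1'] hm K P L.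
have yp : 0 < y by apply: lt_le_trans y0.
have hD := @Dm_pos g (x, y) hdet yp.
rewrite mobE /= in hm; case: hm => ex ey.
set D := Dm g (x, y) in hD ex ey.
have eN : Nm g (x, y) = x' * D by rewrite -ex divfK // gt_eqF.
have eY : y = y' * D by rewrite -ey divfK // gt_eqF.
have Pp : 0 < P by rewrite exprn_gt0.
have Kp : 0 < K by rewrite divr_gt0 //; apply: lt_le_trans y1; apply: lt_le_trans y0.
have hDK : D <= K.
  rewrite ler_pdivlMr //; apply: (le_trans _ y1); rewrite eY; nra.
have X0 : 0 <= X by apply: le_trans hx.
have hx2 := sq_le hx; have hx2' := sq_le hx'.
have hy2 : P <= y ^+ 2 by rewrite /P; apply: sq_le; rewrite ger0_norm // ltW.
move: hD eN eY hDK; rewrite /D /Dm /Nm /= => hD eN eY hDK.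
move: hdet; rewrite det22.
move=> hdet.
have hy2' : y' ^+ 2 <= Y1 ^+ 2.
  by apply: sq_le; rewrite ger0_norm //; apply: le_trans (ltW Y0p) y0'.
have [hc hd ha hb] := sq_bounds hdet Y0p hx2 hx2' hy2 hy2' hD hDK eN eY.
have X2 : 0 <= X ^+ 2 := sqr_ge0 X.
have KP : 0 <= K / P by rewrite divr_ge0 // ltW.
have L0 : 0 <= L by rewrite /L; apply: mulr_ge0; [exact: ltW | apply: addr_ge0; apply: sqr_ge0].
have LP : 0 <= L / P by rewrite divr_ge0 // ltW.
have A20 : 0 <= 2 * K + 2 * (K / P) * X ^+ 2.
  by have := mulr_ge0 KP X2; rewrite -mulrA; lra.
have A40 : 0 <= 2 * L + 2 * (L / P) * X ^+ 2.
  by have := mulr_ge0 LP X2; rewrite -mulrA; lra.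
move: hc hd ha hb KP A20 LP A40.
move: (K / P) (2 * K + 2 * (K / P) * X ^+ 2) (L / P) (2 * L + 2 * (L / P) * X ^+ 2).
move=> A1 A2 A3 A4 hc hd ha hb h1 h2 h3 h4 i j.
apply: le_trans (le_1sq _) _; rewrite lerD2l.
by case: (I2P i) => ->; case: (I2P j) => ->; lra.
Qed.




Lemma ballRE (a b r : R) : ball a r b = (`|a - b| < r).
Proof. by rewrite -ball_normE. Qed.

Lemma ball4 (q q' : R * (R * (R * R))) d : ball q d q' ->
  [/\ `|q.1 - q'.1| < d, `|q.2.1 - q'.2.1| < d, `|q.2.2.1 - q'.2.2.1| < d
    & `|q.2.2.2 - q'.2.2.2| < d].
Proof. by case=> [h1 [h2 [h3 h4]]]; rewrite -!ballRE. Qed.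

Lemma cluster_seq (B d : R) (gs : nat -> 'M[R]_2) :
  (forall n i j, `|gs n i j| <= B) -> 0 < d ->
  exists n0, forall N, exists n, (N <= n)%N /\ forall i j, `|gs n i j - gs n0 i j| < 2 * d.
Proof.
move=> hB d0.
pose v n := (gs n 0 0, (gs n 0 1, (gs n 1 0, gs n 1 1))).
pose I := [set` `[- B, B]] : set R.
have cK : compact (I `*` (I `*` (I `*` I))).
  have cI : compact I by exact: segment_compact.
  by do 3! (apply: compact_setX => //).
have inI : forall n i j, I (gs n i j).
  move=> n i j; rewrite /I /= in_itv /= -ler_norml; exact: hB.
have FK : (v @ \oo) (I `*` (I `*` (I `*` I))).
  have : (\oo : set_system nat) [set n | (I `*` (I `*` (I `*` I))) (v n)].
    by apply: filterE => n; rewrite /v /=; split; [|split; [|split]]; apply: inI.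
  by [].
have [p [_ cp]] := cK _ _ FK.
have nb : nbhs p (ball p d) by apply: nbhsx_ballx.
have key : forall N, exists n, (N <= n)%N /\ ball p d (v n).
  move=> N; have FA : (v @ \oo) (v @` [set n | (N <= n)%N]).
    by apply: filterS (nbhs_infty_ge N) => n hn; exists n.
  have [q [[n hn <-] hq]] := cp _ _ FA nb.
  by exists n.
have [n0 [_ h0]] := key 0%N.
exists n0 => N; have [n [hn h]] := key N; exists n; split => // i j.
have [a1 a2 a3 a4] := ball4 h0; have [b1 b2 b3 b4] := ball4 h.
move: a1 a2 a3 a4 b1 b2 b3 b4; rewrite /v /= => a1 a2 a3 a4 b1 b2 b3 b4.
have tri : forall (x y z : R), `|z - x| < d -> `|z - y| < d -> `|y - x| < 2 * d.
  move=> x y z h1 h2; rewrite (_ : y - x = (z - x) - (z - y)); last by ring.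
  by apply: le_lt_trans (ler_normB _ _) _; lra.
case: (I2P i) => ->; case: (I2P j) => ->.
- exact: tri a1 b1.
- exact: tri a2 b2.
- exact: tri a3 b3.
- exact: tri a4 b4.
Qed.



Lemma fst_cont : continuous (@fst R R).
Proof. move=> p; exact: cvg_fst. Qed.
Lemma snd_cont : continuous (@snd R R).
Proof. move=> p; exact: cvg_snd. Qed.

Lemma cD (f1 f2 : R * R -> R) w : {for w, continuous f1} -> {for w, continuous f2} ->
  {for w, continuous (fun u => f1 u + f2 u)}.
Proof. move=> h1 h2; exact: continuousD h1 h2. Qed.
Lemma cM (f1 f2 : R * R -> R) w : {for w, continuous f1} -> {for w, continuous f2} ->
  {for w, continuous (fun u => f1 u * f2 u)}.
Proof. move=> h1 h2; exact: continuousM h1 h2. Qed.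
Lemma cV (f1 : R * R -> R) w : f1 w != 0 -> {for w, continuous f1} ->
  {for w, continuous (fun u => (f1 u)^-1)}.
Proof. move=> h0 h1; exact: continuousV h0 h1. Qed.
Lemma cC (a : R) w : {for w, continuous (fun u : R * R => a)}.
Proof. exact: cst_continuous. Qed.
Lemma cX w : {for w, continuous (fun u : R * R => u.1)}.
Proof. exact: fst_cont. Qed.
Lemma cY w : {for w, continuous (fun u : R * R => u.2)}.
Proof. exact: snd_cont. Qed.
Lemma cE (f1 : R * R -> R) w : {for w, continuous f1} ->
  {for w, continuous (fun u => f1 u ^+ 2)}.
Proof. by move=> hf; apply: (cM hf hf). Qed.


Lemma cont_Dm g w : {for w, continuous (Dm g)}.
Proof.
rewrite /Dm; apply: cD; apply: cE; [apply: cD | ]; try apply: cM; (apply: cC || apply: cX || apply: cY).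
Qed.

Lemma cont_Nm g w : {for w, continuous (Nm g)}.
Proof.
rewrite /Nm; apply: cD; apply: cM; try apply: cE; try apply: cD; try apply: cM;
  (apply: cC || apply: cX || apply: cY || idtac).
all: try (apply: cD; apply: cM; (apply: cC || apply: cX)).
Qed.

Lemma cont_m1 g w : Dm g w != 0 -> {for w, continuous (fun u => Nm g u / Dm g u)}.
Proof. move=> h; apply: cM; [exact: cont_Nm | apply: cV => //; exact: cont_Dm]. Qed.

Lemma cont_m2 g w : Dm g w != 0 -> {for w, continuous (fun u : R * R => u.2 / Dm g u)}.
Proof. move=> h; apply: cM; [exact: cY | apply: cV => //; exact: cont_Dm]. Qed.


Lemma ball2 (q q' : R * R) r : ball q r q' -> `|q.1 - q'.1| < r /\ `|q.2 - q'.2| < r.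
Proof. by case=> h1 h2; rewrite -!ballRE. Qed.

Lemma lim_eq (f : R * R -> R) (w : R * R) (t : R) : {for w, continuous f} ->
  (forall r, 0 < r -> exists u, ball w r u /\ `|t - f u| < r) -> f w = t.
Proof.
move=> cf hu; apply: contrapT => hne.
have ep : 0 < `|f w - t| / 2 by rewrite divr_gt0 // normr_gt0 subr_eq0; apply/eqP.
have /cvgrPdist_lt/(_ _ ep)/nbhs_ballP[r r0 hr] := cf.
have r'0 : 0 < Num.min r (`|f w - t| / 2) by rewrite lt_min r0 ep.
have [u [hbu htu]] := hu _ r'0.
have /hr /= h1 : ball w r u by apply: le_ball hbu; rewrite ge_min lexx.
have h2 : `|t - f u| < `|f w - t| / 2 by apply: lt_le_trans htu _; rewrite ge_min lexx orbT.
have : `|f w - t| <= `|f w - f u| + `|f u - t|.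
  by rewrite (_ : f w - t = (f w - f u) + (f u - t)); [apply: ler_normD | ring].
rewrite distrC in h2; lra.
Qed.

Lemma mob_fix_lim G (w : R * R) : \det G = 1 -> hplane w ->
  (forall r : R, 0 < r -> exists u : R * R, ball w r u /\ ball w r (mob G u)) -> mob G w = w.
Proof.
move=> hd hw hu; have D0 : Dm G w != 0 by rewrite lt0r_neq0 // Dm_pos.
rewrite mobE; case: w hw hu D0 => x y hw hu D0.
congr pair.
- apply: (@lim_eq (fun u => Nm G u / Dm G u) (x, y) x (cont_m1 D0)) => r r0.
  have [u [h1 hb]] := hu r r0; exists u; split => //.
  by have [h2 _] := ball2 hb; move: h2; rewrite mobE.
- apply: (@lim_eq (fun u : R * R => u.2 / Dm G u) (x, y) y (cont_m2 D0)) => r r0.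
  have [u [h1 hb]] := hu r r0; exists u; split => //.
  by have [_ h2] := ball2 hb; move: h2; rewrite mobE.
Qed.

Definition bnd (X Y0 Y1 : R) :=
  let K := Y1 / Y0 in let P := Y0 ^+ 2 in let L := K * (X ^+ 2 + Y1 ^+ 2) in
  1 + (K / P + (2 * K + 2 * (K / P) * X ^+ 2) + L / P + (2 * L + 2 * (L / P) * X ^+ 2)).

Lemma entry_bound' g (u u' : R * R) (X Y0 Y1 : R) : \det g = 1 -> 0 < Y0 ->
  `|u.1| <= X -> `|u'.1| <= X -> Y0 <= u.2 <= Y1 -> Y0 <= u'.2 <= Y1 ->
  mob g u = u' -> forall i j, `|g i j| <= bnd X Y0 Y1.
Proof. by case: u => x y; case: u' => x' y'; exact: entry_bound. Qed.

Lemma near_bounds (x0 y0 rho r : R) (u : R * R) : 0 < y0 -> rho <= 1 -> rho <= y0 / 2 ->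
  r <= rho -> ball (x0, y0) r u ->
  `|u.1| <= `|x0| + 1 /\ y0 / 2 <= u.2 <= 3 * y0 / 2.
Proof.
move=> y0p r1 r2 rr /ball2 [/= h1 h2].
split.
  have : `|u.1| <= `|x0| + `|x0 - u.1|.
    by rewrite {1}(_ : u.1 = x0 - (x0 - u.1)); [apply: ler_normB | ring].
  lra.
move: h2; rewrite ltr_norml => /andP [a b]; apply/andP; split; lra.
Qed.

Lemma LI (S : topologicalType) (Gam : set 'M[R]_2) (pi : R * R -> S) :
  hyperbolic_surface Gam pi -> forall w, hplane w ->
  exists2 r : R, 0 < r & forall u u', hplane u -> hplane u' -> ball w r u -> ball w r u' ->
    pi u = pi u' -> u = u'.
Proof.
move=> [[[hdet h1] hmul hinv [e0 e0p hdisc] hfree] [_ _ _ pifib] _] [x0 y0] hw.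
have y0p : 0 < y0 by [].
apply: contrapT => hno.
pose rho := Num.min 1 (y0 / 2).
have rho0 : 0 < rho by rewrite lt_min ltr01 divr_gt0.
have rho1 : rho <= 1 by rewrite ge_min lexx.
have rho2 : rho <= y0 / 2 by rewrite ge_min lexx orbT.
pose rr (n : nat) := rho / n.+1%:R.
have rr0 n : 0 < rr n by rewrite divr_gt0.
have rrle n : rr n <= rho.
  by rewrite /rr ler_pdivrMr //; apply: ler_peMr; [exact: ltW | rewrite ler1n].
have hbad : forall n : nat, exists q : (R * R) * (R * R) * 'M[R]_2,
    [/\ hplane q.1.1, hplane q.1.2, ball (x0, y0) (rr n) q.1.1, ball (x0, y0) (rr n) q.1.2
      & [/\ Gam q.2, q.1.2 = mob q.2 q.1.1 & q.1.1 <> q.1.2]].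
  move=> n; apply: contrapT => hq; apply: hno; exists (rr n) => // u u' hu hu' bu bu' hpi.
  apply: contrapT => hne.
  have [g Gg eg] := (pifib u u' hu hu').1 hpi.
  by apply: hq; exists ((u, u'), g); split.
have [q hq] := choice hbad.
pose X := `|x0| + 1; pose Y0 := y0 / 2; pose Y1 := 3 * y0 / 2.
pose Bd := bnd X Y0 Y1.
have hB : forall n i j, `|(q n).2 i j| <= Bd.
  move=> n i j; have [hu hu' bu bu' [Gg eg _]] := hq n.
  have [a1 a2] := near_bounds y0p rho1 rho2 (rrle n) bu.
  have [b1 b2] := near_bounds y0p rho1 rho2 (rrle n) bu'.
  have Y0p : 0 < Y0 by rewrite /Y0 divr_gt0.
  exact: (entry_bound' (hdet _ Gg) Y0p a1 b1 a2 b2 (esym eg)).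
have Bd0 : 0 <= Bd by apply: le_trans (hB 0%N 0 0); apply: normr_ge0.
pose eta := e0 / (2 * Bd + 1).
have den0 : 0 < 2 * Bd + 1 by lra.
have eta0 : 0 < eta by rewrite divr_gt0.
have etaE : eta * (2 * Bd + 1) = e0 by rewrite /eta divfK // lt0r_neq0.
have heta : 2 * eta * Bd < e0 by lra.
have d0 : 0 < eta / 2 by rewrite divr_gt0.
have [n0 hn0] := cluster_seq hB d0.
pose G := (q n0).2.
have [_ _ _ _ [GG eG hneq]] := hq n0.
have freq : forall N, exists n, (N <= n)%N /\ (q n).2 = G.
  move=> N; have [n [hn hc]] := hn0 N; exists n; split => //.
  have [_ _ _ _ [Gg _ _]] := hq n.
  apply: (disc_eq hdisc hmul hinv Gg GG (hdet _ GG) (hB n0)) heta.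
  by move=> i j; move: (hc i j); rewrite mulrC divfK.
have fixG : mob G (x0, y0) = (x0, y0).
  apply: mob_fix_lim (hdet _ GG) hw _ => r r0.
  pose N := Num.truncn (rho / r).
  have [n [hn hg]] := freq N.
  have [_ _ bu bu' [_ eg _]] := hq n.
  have hrr : rr n <= r.
    have := truncnS_gt (rho / r); rewrite -/N => hN.
    have hN' : (N.+1%:R : R) <= n.+1%:R by rewrite ler_nat.
    rewrite /rr ler_pdivrMr // mulrC -ler_pdivrMr //.
    by apply: ltW; apply: lt_le_trans hN hN'.
  exists (q n).1.1; split; first exact: le_ball hrr _ bu.
  have -> : mob G (q n).1.1 = (q n).1.2 by rewrite eg hg.
  exact: le_ball hrr _ bu'.
have := hfree _ _ GG hw fixG; case=> hG; apply: hneq; rewrite eG.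
  by rewrite (_ : (q n0).2 = 1%:M) // mob1.
by rewrite (_ : (q n0).2 = - 1%:M) // mobN1.
Qed.

Lemma open_hplane : open (@hplane R).
Proof.
rewrite /hplane (_ : [set p | 0 < p.2] = snd @^-1` [set x | 0 < x]) //.
apply: (continuousP _).1; [exact: snd_cont | exact: open_gt].
Qed.

Lemma within_hplane (T : topologicalType) (F : R * R -> T) :
  {within @hplane R, continuous F} <-> (forall z, hplane z -> {for z, continuous F}).
Proof.
rewrite continuous_open_subspace; last exact: open_hplane.
by split => h z hz; apply: h; rewrite ?inE // -inE.
Qed.

Lemma lift_id (S : topologicalType) (Gam : set 'M[R]_2) (pi : R * R -> S) :
  identity_lift Gam pi id id.
Proof.
split => //; apply/within_hplane => z _; exact: cvg_id.
Qed.

Lemma lift_comp (S : topologicalType) (Gam : set 'M[R]_2) (pi : R * R -> S)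
    (f1 f2 : S -> S) (F G : R * R -> R * R) :
  identity_lift Gam pi f1 F -> identity_lift Gam pi f2 G ->
  identity_lift Gam pi (f2 \o f1) (G \o F).
Proof.
move=> [Fc Fh Fpi Fcomm] [Gc Gh Gpi Gcomm]; split.
- apply/within_hplane => z hz; apply: continuous_comp.
    exact: (within_hplane F).1 Fc z hz.
  exact: (within_hplane G).1 Gc _ (Fh z hz).
- by move=> z hz; apply: Gh; apply: Fh.
- by move=> z hz /=; rewrite Gpi ?Fpi //; apply: Fh.
- by move=> h z Gh' hz /=; rewrite Fcomm // Gcomm //; apply: Fh.
Qed.

Lemma fix_common (S : topologicalType) (Gam : set 'M[R]_2) (pi : R * R -> S)
    (f : S -> S) (F : R * R -> R * R) (z1 z0 : R * R) :
  quotient_by Gam pi -> identity_lift Gam pi f F -> hplane z1 -> hplane z0 ->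
  F z1 = z1 -> pi z1 = pi z0 -> F z0 = z0.
Proof.
move=> [_ _ _ pifib] [_ _ _ Fcomm] h1 h0 hF hpi.
have [g Gg ->] := (pifib z1 z0 h1 h0).1 hpi.
by rewrite Fcomm // hF.
Qed.

Lemma lift_inv (S : topologicalType) (Gam : set 'M[R]_2) (pi : R * R -> S)
    (f h : S -> S) (F : R * R -> R * R) :
  hyperbolic_surface Gam pi -> homeo f -> cancel f h -> cancel h f ->
  identity_lift Gam pi f F ->
  exists H, identity_lift Gam pi h H /\ forall z, hplane z -> H (F z) = z.
Proof.
move=> hs [fc [g' g'c [c1 c2]]] fh hf hF.
have hs' := hs.
move: hs' => [[[hdet _] _ _ _ hfree] [picont piopen pisurj pifib] _].
move: (hF) => [Fc Fh Fpi Fcomm].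
have Finj : forall z w, hplane z -> hplane w -> F z = F w -> z = w.
  move=> z w hz hw e.
  have epi : pi z = pi w by rewrite -(fh (pi z)) -(fh (pi w)) -!Fpi // e.
  have [g Gg ew] := (pifib z w hz hw).1 epi.
  have fx : mob g (F w) = F w by rewrite -e -Fcomm // -ew.
  by case: (hfree g (F w) Gg (Fh w hw) fx) => hg; rewrite ew hg ?mob1 ?mobN1.
have Fsurj : forall w, exists z, hplane w -> hplane z /\ F z = w.
  move=> w; case: (pselect (hplane w)) => hw; last by exists w.
  have [z hz ez] := pisurj (h (pi w)).
  have e1 : pi (F z) = pi w by rewrite Fpi // ez hf.
  have [g Gg ew] := (pifib (F z) w (Fh z hz) hw).1 e1.
  exists (mob g z) => _; split; first exact: hplane_mob (hdet _ Gg) hz.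
  by rewrite Fcomm.
have [H hH] := choice Fsurj.
have HF : forall z, hplane z -> H (F z) = z.
  move=> z hz; have [h1 h2] := hH (F z) (Fh z hz); exact: Finj.
have hc : continuous h.
  have -> : h = g' by apply: funext => y; rewrite -{1}(c2 y) fh.
  exact: g'c.
have Hpi : forall w, hplane w -> pi (H w) = h (pi w).
  move=> w hw; have [h1 h2] := hH w hw.
  by rewrite -{2}h2 Fpi // fh.
exists H; split => //; split.
- apply/within_hplane => w hw.
  have [r r0 hLI] := LI hs hw.
  have [Hw1 Hw2] := hH w hw.
  move=> V /= hV.
  have hFc : {for H w, continuous F} by exact: (within_hplane F).1 Fc _ Hw1.
  have nbF : nbhs (H w) (F @^-1` ball w r).
    by apply: hFc; rewrite Hw2; apply: nbhsx_ballx.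
  have nbP : nbhs (H w) (@hplane R).
    by apply: open_nbhs_nbhs; split; [exact: open_hplane | exact: Hw1].
  have hN : nbhs (H w) (V `&` (@hplane R `&` F @^-1` ball w r)).
    by apply: filterI => //; apply: filterI.
  set O := interior (V `&` (@hplane R `&` F @^-1` ball w r)).
  have oO : open O by exact: open_interior.
  have OHw : O (H w) by exact: hN.
  have sO : O `<=` V `&` (@hplane R `&` F @^-1` ball w r) by exact: interior_subset.
  have OP : O `<=` @hplane R by move=> o /sO [_ []].
  have oPO : open (pi @` O) by apply: piopen.
  have piin : {in @hplane R, continuous pi}.
    by move=> z; rewrite inE => hz; exact: (within_hplane pi).1 picont z hz.
  have oW : open (@hplane R `&` pi @^-1` (h @^-1` (pi @` O))).
    apply: ((continuous_inP _ open_hplane).1 piin).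
    exact: (continuousP _).1 hc _ oPO.
  have nbW : nbhs w (@hplane R `&` pi @^-1` (h @^-1` (pi @` O))).
    apply: open_nbhs_nbhs; split => //; split => //=.
    by exists (H w) => //; rewrite Hpi.
  suff : nbhs w (H @^-1` V) by [].
  apply: (@filterS _ (nbhs w)) (filterI nbW (nbhsx_ballx w r r0)) => w1 [[hw1 [p1 Oo eo]] bw1].
  have [hV1 [ho hbo]] := sO p1 Oo.
  have e1 : pi (F p1) = pi w1 by rewrite Fpi // eo hf.
  have e2 : F p1 = w1 by apply: hLI => //; apply: Fh.
  by rewrite /= -e2 HF.
- by move=> w hw; have [] := hH w hw.
- exact: Hpi.
- move=> g z Gg hz; have [h1 h2] := hH z hz.
  have hm : hplane (mob g z) by exact: hplane_mob (hdet _ Gg) hz.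
  have [h3 h4] := hH _ hm.
  apply: Finj => //; first exact: hplane_mob (hdet _ Gg) h1.
  by rewrite h4 Fcomm // h2.
Qed.

End S.
End Aux.
Import Aux.

Theorem lemma2p1 (R : realType) (S : topologicalType)
    (Gam : set 'M[R]_2) (pi : R * R -> S)
    (m : nat) (fs : 'I_m -> S -> S) :
  hyperbolic_surface Gam pi ->
  (forall i, Homeo0 R (fs i)) ->
  (forall g h, gen_group fs g -> gen_group fs h -> g \o h = h \o g) ->
  \bigcap_(i in [set: 'I_m]) Fix_c Gam pi (fs i)
    `<=` Fix_c_group Gam pi (gen_group fs).
Proof.
move=> hs h0 _ x hx f Gf.
have hs' := hs; move: hs' => [_ hq _]; have hq' := hq.
move: hq' => [_ _ pisurj _].
have [z0 hz0 ez0] := pisurj x.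
suff [F [hF fx]] : exists F, identity_lift Gam pi f F /\ F z0 = z0.
  by exists F; split => //; exists z0.
elim: Gf.
- by exists id; split; [exact: lift_id | by []].
- move=> g i _ [G [hG gx]].
  have [Fi [hFi [zi hzi [fzi pzi]]]] := hx i I.
  have fz : Fi z0 = z0 by apply: (fix_common hq hFi hzi hz0 fzi); rewrite pzi ez0.
  exists (G \o Fi); split; first exact: lift_comp hFi hG.
  by rewrite /= fz gx.
- move=> g i h _ [G [hG gx]] c1 c2.
  have [Fi [hFi [zi hzi [fzi pzi]]]] := hx i I.
  have fz : Fi z0 = z0 by apply: (fix_common hq hFi hzi hz0 fzi); rewrite pzi ez0.
  have [H [hH HF]] := lift_inv hs (h0 i).1 c1 c2 hFi.
  have Hz : H z0 = z0 by rewrite -{1}fz HF.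
  exists (G \o H); split; first exact: lift_comp hH hG.
  by rewrite /= Hz gx.
Qed.
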